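(* Let $(a_n)_{\mathrm c}\in\widetilde{\mathbb C}_{\mathrm c}$ and $c\in\widetilde{\mathbb C}$. Then there exists $q\in\mathbb N$ such that $B_{\mathrm d\rho^q}(c)\subseteq S((a_n)_{\mathrm c},c)$.
   Context: Fix $I=(0,1]$ and a gauge $\rho=(\rho_\varepsilon)_{\varepsilon\in I}$ with $\rho_\varepsilon\in I$ and $\rho_\varepsilon\to0$ as $\varepsilon\to0$. ''$\forall^0\varepsilon$'' means ''for all sufficiently small $\varepsilon\in I$''. A net $(x_\varepsilon)\in\mathbb C^I$ is $\rho$-moderate ($(x_\varepsilon)\in\mathbb C_\rho$) if $\exists N\in\mathbb N\,\forall^0\varepsilon:|x_\varepsilon|\le\rho_\varepsilon^{-N}$, and $\rho$-negligible if $\forall q\in\mathbb N\,\forall^0\varepsilon:|x_\varepsilon|\le\rho_\varepsilon^q$. $\widetilde{\mathbb C}:=\mathbb C_\rho/\{\text{negligible nets}\}$ with classes $[x_\varepsilon]$; $\widetilde{\mathbb R}\subseteq\widetilde{\mathbb C}$ consists of classes of real moderate nets; $\mathrm d\rho:=[\rho_\varepsilon]$, $|[z_\varepsilon]|:=[|z_\varepsilon|]$. On $\widetilde{\mathbb R}$: $[x_\varepsilon]\le[y_\varepsilon]$ iff $x_\varepsilon\le y_\varepsilon+z_\varepsilon$ $\forall^0\varepsilon$ for some negligible $(z_\varepsilon)$; $x<y$ iff $\exists m\,\forall^0\varepsilon:y_\varepsilon-x_\varepsilon>\rho_\varepsilon^m$; $\widetilde{\mathbb R}_{>0}:=\{x:x>0\}$.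 $B_r(c):=\{z\in\widetilde{\mathbb C}:|z-c|<r\}$ for $r\in\widetilde{\mathbb R}_{>0}$ (these balls generate the sharp topology). Hypernatural numbers: $\widetilde{\mathbb N}:=\{[n_\varepsilon]\in\widetilde{\mathbb R}:n_\varepsilon\in\mathbb N\ \forall\varepsilon\}$; for each $N\in\widetilde{\mathbb N}$ a representative $(\mathrm{ni}(N)_\varepsilon)$ with all $\mathrm{ni}(N)_\varepsilon\in\mathbb N$ is fixed. Hyperlimit: $l=\lim_{n\in\widetilde{\mathbb N}}a_n$ means $\forall q\,\exists M\in\widetilde{\mathbb N}\,\forall n\in\widetilde{\mathbb N}:n\ge M\Rightarrow|a_n-l|<\mathrm d\rho^q$. Hyperseries: a net $(a_{n\varepsilon})_{n\in\mathbb N,\varepsilon\in I}$ is moderate over hypersums if for every $N\in\widetilde{\mathbb N}$ the net $(\sum_{n=0}^{\mathrm{ni}(N)_\varepsilon}a_{n\varepsilon})_\varepsilon$ is $\rho$-moderate; two such nets are equivalent if for all $N,M\in\widetilde{\mathbb N}$ the net $(\sum_{n=\mathrm{ni}(N)_\varepsilon}^{\mathrm{ni}(M)_\varepsilon}(a_{n\varepsilon}-\bar a_{n\varepsilon}))_\varepsilon$ is negligible; the quotient is $\widetilde{\mathbb C}_{\mathrm s}$ with classes $[a_{n\varepsilon}]_{\mathrm s}$. $\sum_{n=N}^Ma_n:=[\sum_{n=\mathrm{ni}(N)_\varepsilon}^{\mathrm{ni}(M)_\varepsilon}a_{n\varepsilon}]$, and $\sum_{n\in\widetilde{\mathbb N}}a_n:=\lim_{N\in\widetilde{\mathbb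 N}}\sum_{n=0}^Na_n$ when this hyperlimit exists (convergence). Coefficients: $\widetilde{\mathbb C}_{\mathrm c}$ is the set of weakly $\rho$-moderate nets $(a_{n\varepsilon})$ ($\exists Q,R\in\mathbb N\,\forall^0\varepsilon\,\forall n\in\mathbb N:|a_{n\varepsilon}|\le\rho_\varepsilon^{-nQ-R}$) modulo strong equivalence ($\forall q,r\,\forall^0\varepsilon\,\forall n:|a_{n\varepsilon}-\bar a_{n\varepsilon}|\le\rho_\varepsilon^{nq+r}$), classes $(a_n)_{\mathrm c}=[a_{n\varepsilon}]_{\mathrm c}$. $\widetilde{\mathbb R}_\infty:=(\mathbb R\cup\{\pm\infty\})^I/\sim_\rho$ (same negligibility relation), ordered by $x\le y$ iff some representatives satisfy $x_\varepsilon\le y_\varepsilon$ $\forall^0\varepsilon$, and for $x\in\widetilde{\mathbb R}$, $x<y$ iff $\exists m\,\forall^0\varepsilon:y_\varepsilon>x_\varepsilon+\rho_\varepsilon^m$. Radius: $\mathrm{rad}(a_n)_{\mathrm c}:=[(\limsup_n|a_{n\varepsilon}|^{1/n})^{-1}]\in\widetilde{\mathbb R}_\infty$. Set of convergence: $S((a_n)_{\mathrm c},c)$ is the set of $z\in\widetilde{\mathbb C}$ with $|z-c|<\mathrm{rad}(a_n)_{\mathrm c}$ for which there exist representatives $z=[z_\varepsilon]$, $c=[c_\varepsilon]$, $(a_n)_{\mathrm c}=[a_{n\varepsilon}]_{\mathrm c}$ such that: (a) the net $(a_{n\varepsilon}(z_\varepsilon-c_\varepsilon)^n)_{n,\varepsilon}$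 is moderate over hypersums (its class $(a_n(z-c)^n)_n\in\widetilde{\mathbb C}_{\mathrm s}$ is called a formal hyperpower series); (b) the hyperseries $\sum_{n\in\widetilde{\mathbb N}}a_n(z-c)^n$ converges and equals $[\sum_{n=0}^{\infty}a_{n\varepsilon}(z_\varepsilon-c_\varepsilon)^n]$ (these ordinary series converging for small $\varepsilon$ to a moderate net); (c) for every representative $z=[\hat z_\varepsilon]$, the net $(\sum_{n\ge1}na_{n\varepsilon}(\hat z_\varepsilon-c_\varepsilon)^{n-1})_\varepsilon$ (derivative of the $\varepsilon$-wise power series at $\hat z_\varepsilon$) is $\rho$-moderate. *)

(* Defs.v *)
From Stdlib Require Import Reals.
From Coquelicot Require Import Coquelicot.
Open Scope R_scope.

(* Nets are functions R -> X; only the values at e in I = (0,1] are ever used. *)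

Definition ev (P : R -> Prop) : Prop :=
  exists e0 : R, 0 < e0 /\ forall e : R, 0 < e -> e <= e0 -> e <= 1 -> P e.

Definition is_gauge (rho : R -> R) : Prop :=
  (forall e : R, 0 < e <= 1 -> 0 < rho e <= 1) /\
  (forall eta : R, 0 < eta -> exists d : R, 0 < d /\
     forall e : R, 0 < e < d -> e <= 1 -> rho e < eta).

Definition moderate (rho : R -> R) (x : R -> C) : Prop :=
  exists N : nat, ev (fun e => Cmod (x e) <= / (rho e ^ N)%R).
Definition negligible (rho : R -> R) (x : R -> C) : Prop :=
  forall q : nat, ev (fun e => (Cmod (x e) <= rho e ^ q)%R).
Definition Rmoderate (rho : R -> R) (x : R -> R) : Prop :=
  exists N : nat, ev (fun e => Rabs (x e) <= / (rho e ^ N)%R).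
Definition Rnegligible (rho : R -> R) (x : R -> R) : Prop :=
  forall q : nat, ev (fun e => Rabs (x e) <= rho e ^ q).

Definition same_class (rho : R -> R) (x y : R -> C) : Prop :=
  negligible rho (fun e => (x e - y e)%C).

Definition Rt_le (rho : R -> R) (x y : R -> R) : Prop :=
  exists z : R -> R, Rnegligible rho z /\ ev (fun e => x e <= y e + z e).
Definition Rt_lt (rho : R -> R) (x y : R -> R) : Prop :=
  exists m : nat, ev (fun e => y e - x e > rho e ^ m).
Definition Rt_lt_inf (rho : R -> R) (x : R -> R) (y : R -> Rbar) : Prop :=
  exists m : nat, ev (fun e => Rbar_lt (Finite (x e + rho e ^ m)) (y e)).

(* hypernatural numbers, given by a representative with values in nat
   (which is moderate as a real net) *)
Definition hypernat (rho : R -> R) (n : R -> nat) : Prop :=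
  Rmoderate rho (fun e => INR (n e)).

Fixpoint csum (f : nat -> C) (n : nat) : C :=
  match n with
  | O => f O
  | S k => (csum f k + f (S k))%C
  end.
Definition moderate_hypersums (rho : R -> R) (a : nat -> R -> C) : Prop :=
  forall N : R -> nat, hypernat rho N ->
    moderate rho (fun e => csum (fun n => a n e) (N e)).

Definition hyperseries_lim (rho : R -> R) (a : nat -> R -> C) (l : R -> C) : Prop :=
  forall q : nat, exists M : R -> nat, hypernat rho M /\
    forall n : R -> nat, hypernat rho n ->
      Rt_le rho (fun e => INR (M e)) (fun e => INR (n e)) ->
      Rt_lt rho (fun e => Cmod (csum (fun k => a k e) (n e) - l e)%C)
                (fun e => rho e ^ q).

Definition weakly_moderate (rho : R -> R) (a : nat -> R -> C) : Prop :=
  exists Q Rr : nat, ev (fun e => forall n : nat,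
    Cmod (a n e) <= / (rho e ^ (n * Q + Rr))).
Definition strongly_equiv (rho : R -> R) (a b : nat -> R -> C) : Prop :=
  forall q r : nat, ev (fun e => forall n : nat,
    Cmod (a n e - b n e)%C <= rho e ^ (n * q + r)).

Definition nroot (n : nat) (x : R) : R :=
  if Req_EM_T x 0 then 0 else Rpower x (/ INR n).

Definition Rbar_recip (l : Rbar) : Rbar :=
  match l with
  | Finite r => if Req_EM_T r 0 then p_infty else Finite (/ r)
  | p_infty => Finite 0
  | m_infty => p_infty
  end.

Definition rad (a : nat -> R -> C) : R -> Rbar :=
  fun e => Rbar_recip (LimSup_seq (fun n => nroot n (Cmod (a n e)))).

Definition in_S (rho : R -> R) (a : nat -> R -> C) (c z : R -> C) : Prop :=
  Rt_lt_inf rho (fun e => Cmod (z e - c e)%C) (rad a) /\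
  exists (z' c' : R -> C) (a' : nat -> R -> C),
    same_class rho z' z /\ same_class rho c' c /\
    weakly_moderate rho a' /\ strongly_equiv rho a' a /\
    moderate_hypersums rho (fun n e => (a' n e * Cpow (z' e - c' e) n)%C) /\
    (exists l : R -> C, moderate rho l /\
       ev (fun e => is_series (fun n => (a' n e * Cpow (z' e - c' e) n)%C) (l e)) /\
       hyperseries_lim rho (fun n e => (a' n e * Cpow (z' e - c' e) n)%C) l) /\
    (forall zh : R -> C, same_class rho zh z' ->
       exists d : R -> C, moderate rho d /\
         ev (fun e => is_series
               (fun n => (RtoC (INR (S n)) * a' (S n) e * Cpow (zh e - c' e) n)%C) (d e))).

(* Main.v *)
From Stdlib Require Import Reals Lra Lia Psatz ClassicalEpsilon.
From Coquelicot Require Import Coquelicot.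
Require Import Defs.
Open Scope R_scope.


Lemma csum_sum (b : nat -> C) N : csum b N = sum_n b N.
Proof.
  induction N as [|N IH]; simpl.
  - now rewrite sum_O.
  - rewrite sum_Sn, IH. reflexivity.
Qed.

Section Ser.
Variables (b : nat -> C) (K s : R).
Hypothesis HK : 0 <= K.
Hypothesis Hs : 0 <= s <= 1/2.
Hypothesis Hb : forall n, Cmod (b n) <= K * s ^ n.

Lemma partial_bound N : Cmod (csum b N) <= 2*K - 2*K*s^(S N).
Proof.
  induction N as [|N IH]; simpl.
  - specialize (Hb 0). simpl in Hb. nra.
  - eapply Rle_trans; [apply Cmod_triangle|].
    specialize (Hb (S N)). simpl in *.
    assert (0 <= s^N) by (apply pow_le; lra).
    assert (0 <= K * (s*s^N)) by (apply Rmult_le_pos; nra).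
    replace (K*(s*(s*s^N))) with (s*(K*(s*s^N))) by ring.
    replace (2*K*(s*(s*s^N))) with (2*s*(K*(s*s^N))) by ring.
    nra.
Qed.

Lemma diff_bound N d : Cmod (csum b (N+d) - csum b N)%C <= 2*K*s^(S N) - 2*K*s^(S (N+d)).
Proof.
  induction d as [|d IH].
  - rewrite Nat.add_0_r. replace (csum b N - csum b N)%C with (RtoC 0) by ring.
    rewrite Cmod_0. lra.
  - replace (N + S d)%nat with (S (N+d)) by lia. simpl csum.
    replace (csum b (N + d) + b (S (N + d)) - csum b N)%C
      with ((csum b (N + d) - csum b N) + b (S (N + d)))%C by ring.
    eapply Rle_trans; [apply Cmod_triangle|].
    specialize (Hb (S (N+d))). simpl in *.
    assert (0 <= s^(N+d)) by (apply pow_le; lra).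
    assert (0 <= K * (s*s^(N+d))) by (apply Rmult_le_pos; nra).
    replace (2*K*(s*(s*s^(N+d)))) with (2*s*(K*(s*s^(N+d)))) by ring.
    replace (2*K*(s*s^(N+d))) with (2*(K*(s*s^(N+d)))) by ring.
    nra.
Qed.

Lemma series_ex : ex_series b.
Proof.
  apply (ex_series_le b (fun n => K * s^n)).
  - intros n. exact (Hb n).
  - apply (ex_series_ext (fun n => s^n * K)). { intros n; simpl; ring. }
    apply ex_series_scal_r. apply ex_series_geom.
    rewrite Rabs_pos_eq; lra.
Qed.

Lemma tail_bound L : is_series b L -> forall N, Cmod (csum b N - L)%C <= 2*K*s^(S N).
Proof.
  intros HL N. apply le_epsilon. intros eps Heps.
  set (nf := @norm_factor _ C_NormedModule).
  assert (Hnf : 0 < nf) by apply norm_factor_gt_0.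
  unfold is_series in HL. pose proof (proj1 (@filterlim_locally _ _ eventually _ (sum_n b) L) HL) as HL2. clear HL. rename HL2 into HL.
  assert (Hpe : 0 < eps / nf) by (apply Rdiv_lt_0_compat; lra).
  destruct (HL (mkposreal _ Hpe)) as [N0 HN0].
  specialize (HN0 (N + N0)%nat ltac:(lia)).
  pose proof (@norm_compat2 _ C_NormedModule L (sum_n b (N + N0)) (mkposreal _ Hpe) HN0) as HN1. clear HN0. rename HN1 into HN0. simpl in HN0. fold nf in HN0.
  replace (nf * (eps / nf)) with eps in HN0 by (field; lra).
  change (Cmod (minus (sum_n b (N + N0)) L) < eps) in HN0.
  replace (csum b N - L)%C with (-(csum b (N+N0) - csum b N) + (csum b (N + N0) - L))%C by ring.
  eapply Rle_trans; [apply Cmod_triangle|].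
  rewrite Cmod_opp.
  pose proof (diff_bound N N0).
  rewrite !csum_sum in H |- *.
  assert (0 <= s^(S (N+N0))) by (apply pow_le; lra).
  change (Cmod (minus (sum_n b (N + N0)) L)) with (Cmod (sum_n b (N + N0) - L)%C) in HN0.
  try rewrite !csum_sum in H.
  assert (0 <= K * s ^ S (N + N0)) by (apply Rmult_le_pos; lra).
  lra.
Qed.

Lemma L_bound L : is_series b L -> Cmod L <= 4*K.
Proof.
  intros HL. pose proof (tail_bound L HL 0). pose proof (partial_bound 0).
  replace L with (csum b 0 - (csum b 0 - L))%C by ring.
  eapply Rle_trans; [apply Cmod_triangle|]. rewrite Cmod_opp.
  simpl in *. assert (0 <= K*s) by nra. nra.
Qed.
End Ser.

Lemma ev_and (P Q : R -> Prop) : ev P -> ev Q -> ev (fun e => P e /\ Q e).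
Proof.
  intros [a [Ha HP]] [b [Hb HQ]]. exists (Rmin a b). split.
  - now apply Rmin_glb_lt.
  - intros e He1 He2 He3. split.
    + apply HP; auto. eapply Rle_trans; [apply He2|apply Rmin_l].
    + apply HQ; auto. eapply Rle_trans; [apply He2|apply Rmin_r].
Qed.

Lemma ev_impl (P Q : R -> Prop) : ev P -> (forall e, P e -> Q e) -> ev Q.
Proof.
  intros [a [Ha HP]] H. exists a. split; auto.
Qed.

Lemma ev_gauge rho : is_gauge rho -> ev (fun e => 0 < rho e <= 1/2).
Proof.
  intros [H1 H2]. destruct (H2 (1/2) ltac:(lra)) as [d [Hd Hd2]].
  exists (d/2). split; [lra|]. intros e He1 He2 He3. split.
  - apply H1; lra.
  - left. apply Hd2; lra.
Qed.

Lemma pow_decr r a d : 0 < r <= 1 -> r ^ (a + d) <= r ^ a.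
Proof.
  intros Hr. induction d as [|d IH].
  - rewrite Nat.add_0_r. lra.
  - replace (a + S d)%nat with (S (a + d)) by lia. simpl.
    assert (0 <= r^(a+d)) by (apply pow_le; lra). nra.
Qed.

Lemma pow_decr' r a b : 0 < r <= 1 -> (a <= b)%nat -> r ^ b <= r ^ a.
Proof.
  intros Hr Hab. replace b with (a + (b - a))%nat by lia. now apply pow_decr.
Qed.

Lemma INR_2pow n : INR (S n) <= 2 ^ n.
Proof.
  induction n as [|n IH]; [simpl; lra|].
  rewrite S_INR. change (2^(S n)) with (2 * 2^n). assert (1 <= 2^n) by (apply pow_R1_Rle; lra). lra.
Qed.

Lemma inv_pow_4 r k : 0 < r <= 1/2 -> 4 * / r ^ k <= / r ^ (k + 2).
Proof.
  intros Hr. assert (0 < r^k) by (apply pow_lt; lra).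
  replace (/ r ^ (k+2)) with (/ r^k * (/r * /r)).
  2:{ rewrite pow_add. simpl. field. split; lra. }
  assert (0 < / r^k) by (apply Rinv_0_lt_compat; lra).
  assert (2 <= / r). { rewrite <- (Rinv_inv 2). apply Rinv_le_contravar; lra. }
  assert (4 <= / r * / r) by nra.
  rewrite (Rmult_comm (/ r^k)). apply Rmult_le_compat_r; lra.
Qed.

Lemma choose_series (f : R -> nat -> C) :
  exists l : R -> C, forall e, ex_series (f e) -> is_series (f e) (l e).
Proof.
  assert (H : forall e, exists L : C, ex_series (f e) -> is_series (f e) L).
  { intros e. destruct (classic (ex_series (f e))) as [[L HL]|HN].
    - exists L; auto.
    - exists (RtoC 0). intros; contradiction. }
  exists (fun e => proj1_sig (constructive_indefinite_description _ (H e))).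
  intros e. destruct (constructive_indefinite_description _ (H e)); simpl; auto.
Qed.

Lemma nroot_bound n x y k : (1 <= n)%nat -> 0 <= x -> 0 < y -> x <= y ^ (n * k) ->
  nroot n x <= y ^ k.
Proof.
  intros Hn Hx Hy Hxy. unfold nroot. destruct (Req_EM_T x 0).
  - apply pow_le; lra.
  - assert (0 < INR n) by (apply lt_0_INR; lia).
    eapply Rle_trans.
    + apply Rle_Rpower_l. { left. apply Rinv_0_lt_compat; lra. } split; [lra|exact Hxy].
    + rewrite <- Rpower_pow by lra. rewrite Rpower_mult, mult_INR.
      replace (INR n * INR k * / INR n) with (INR k) by (field; lra).
      rewrite Rpower_pow by lra. lra.
Qed.

Lemma term_bound (A : nat -> C) (w : C) r Q Rr :
  0 < r <= 1/2 -> (forall n, Cmod (A n) <= / r ^ (n * Q + Rr)) -> Cmod w <= r ^ (Q+3) ->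
  forall n, Cmod (A n * Cpow w n)%C <= / r ^ Rr * (r/2) ^ n.
Proof.
  intros Hr HA Hw n.
  rewrite Cmod_mult, Cmod_pow.
  assert (0 < r^Q) by (apply pow_lt; lra).
  assert (0 < r^Rr) by (apply pow_lt; lra).
  assert (Hwn : Cmod w ^ n <= (r^Q)^n * (r^3)^n).
  { rewrite <- Rpow_mult_distr, <- pow_add. apply pow_incr. split; [apply Cmod_ge_0|exact Hw]. }
  assert (Ha : / r ^ (n*Q + Rr) = / (r^Q)^n * / r^Rr).
  { rewrite pow_add, <- pow_mult, Nat.mul_comm. rewrite Rinv_mult. reflexivity. }
  assert (H3 : (r^3)^n <= (r/2)^n).
  { apply pow_incr. split; [apply pow_le; lra|]. simpl. nra. }
  assert (0 < (r^Q)^n) by (apply pow_lt; lra).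
  assert (0 <= (r^3)^n) by (apply pow_le; apply pow_le; lra).
  eapply Rle_trans.
  { apply Rmult_le_compat; [apply Cmod_ge_0|apply pow_le, Cmod_ge_0|apply HA|apply Hwn]. }
  rewrite Ha.
  replace (/ (r ^ Q) ^ n * / r ^ Rr * ((r ^ Q) ^ n * (r ^ 3) ^ n)) with (/ r^Rr * (r^3)^n)
    by (field; split; lra).
  apply Rmult_le_compat_l; [left; apply Rinv_0_lt_compat; lra|exact H3].
Qed.

Lemma dterm_bound (A : nat -> C) (w : C) r Q Rr :
  0 < r <= 1/2 -> (forall n, Cmod (A n) <= / r ^ (n * Q + Rr)) -> Cmod w <= r ^ (Q+3) ->
  forall n, Cmod (RtoC (INR (S n)) * A (S n) * Cpow w n)%C <= / r ^ (Q + Rr) * (1/2) ^ n.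
Proof.
  intros Hr HA Hw n.
  rewrite !Cmod_mult, Cmod_pow, Cmod_R, Rabs_pos_eq by apply pos_INR.
  assert (0 < r^Q) by (apply pow_lt; lra).
  assert (0 < r^Rr) by (apply pow_lt; lra).
  assert (Hwn : Cmod w ^ n <= (r^Q)^n * (r^3)^n).
  { rewrite <- Rpow_mult_distr, <- pow_add. apply pow_incr. split; [apply Cmod_ge_0|exact Hw]. }
  assert (Ha : / r ^ (S n*Q + Rr) = / (r^Q)^n * / r^(Q + Rr)).
  { rewrite <- pow_mult. replace (S n * Q + Rr)%nat with (Q*n + (Q + Rr))%nat by lia.
    rewrite pow_add, Rinv_mult. reflexivity. }
  assert (H3 : INR (S n) * (r^3)^n <= (1/2)^n).
  { assert ((r^3)^n <= (1/4)^n).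
    { apply pow_incr. split; [apply pow_le; lra|]. simpl. nra. }
    assert (Hp : (1/4)^n * 2^n = (1/2)^n).
    { rewrite <- Rpow_mult_distr. f_equal. lra. }
    pose proof (INR_2pow n).
    assert (0 <= (1/4)^n) by (apply pow_le; lra).
    assert (0 <= (r^3)^n) by (apply pow_le; apply pow_le; lra).
    assert (0 <= INR (S n)) by apply pos_INR.
    rewrite <- Hp, Rmult_comm. apply Rmult_le_compat; lra. }
  assert (0 < (r^Q)^n) by (apply pow_lt; lra).
  assert (0 <= (r^3)^n) by (apply pow_le; apply pow_le; lra).
  assert (0 < r^(Q+Rr)) by (apply pow_lt; lra).
  eapply Rle_trans.
  { apply Rmult_le_compat; [apply Rmult_le_pos; [apply pos_INR|apply Cmod_ge_0]|apply pow_le, Cmod_ge_0| |apply Hwn].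
    apply Rmult_le_compat_l; [apply pos_INR|apply HA]. }
  rewrite Ha.
  replace (INR (S n) * (/ (r ^ Q) ^ n * / r ^ (Q + Rr)) * ((r ^ Q) ^ n * (r ^ 3) ^ n))
    with (/ r^(Q + Rr) * (INR (S n) * (r^3)^n)) by (field; split; lra).
  apply Rmult_le_compat_l; [left; apply Rinv_0_lt_compat; lra|exact H3].
Qed.

Lemma nroot_ge0 n x : 0 <= nroot n x.
Proof.
  unfold nroot. destruct (Req_EM_T x 0); [lra|]. unfold Rpower. left; apply exp_pos.
Qed.

Lemma rad_bound (A : nat -> C) r Q Rr x :
  0 < r <= 1/2 -> (forall n, Cmod (A n) <= / r ^ (n * Q + Rr)) -> x < r ^ (Q+1) ->
  Rbar_lt (Finite x) (Rbar_recip (LimSup_seq (fun n => nroot n (Cmod (A n))))).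
Proof.
  intros Hr HA Hx.
  assert (H0 : Rbar_le (Finite 0) (LimSup_seq (fun n => nroot n (Cmod (A n))))).
  { rewrite <- (LimSup_seq_const 0). apply LimSup_le. exists O. intros; apply nroot_ge0. }
  assert (HM : Rbar_le (LimSup_seq (fun n => nroot n (Cmod (A n)))) (Finite ((/r)^(Q+1)))).
  { rewrite <- (LimSup_seq_const ((/r)^(Q+1))). apply LimSup_le. exists (S Rr).
    intros n Hn. apply nroot_bound; [lia|apply Cmod_ge_0|apply Rinv_0_lt_compat; lra|].
    eapply Rle_trans; [apply HA|]. rewrite <- pow_inv.
    apply Rle_pow. { rewrite <- Rinv_1. apply Rinv_le_contravar; lra. } nia. }
  destruct (LimSup_seq (fun n => nroot n (Cmod (A n)))) as [l| |]; simpl in *; try contradiction.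
  destruct (Req_EM_T l 0); simpl; auto.
  assert (0 < r^(Q+1)) by (apply pow_lt; lra).
  assert (Hl : l <= / r^(Q+1)) by (rewrite <- pow_inv; exact HM).
  apply Rlt_le_trans with (r^(Q+1)); auto.
  rewrite <- (Rinv_inv (r^(Q+1))). apply Rinv_le_contravar; lra.
Qed.

Lemma Kpos r k : 0 < r -> 0 <= / r ^ k.
Proof. intros; left; apply Rinv_0_lt_compat, pow_lt; lra. Qed.

Theorem theorem2p26 (rho : R -> R) (Hrho : is_gauge rho)
  (a : nat -> R -> C) (Ha : weakly_moderate rho a)
  (c : R -> C) (Hc : moderate rho c) :
  exists q : nat, forall z : R -> C, moderate rho z ->
    Rt_lt rho (fun e => Cmod (z e - c e)%C) (fun e => rho e ^ q) ->
    in_S rho a c z.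
Proof.
  destruct Ha as [Q [Rr HQ]].
  pose proof (ev_gauge rho Hrho) as HG.
  exists (Q+3)%nat. intros z Hz [m Hm].
  assert (HC : ev (fun e => (0 < rho e <= 1/2) /\ (forall n, Cmod (a n e) <= / rho e ^ (n*Q+Rr))
      /\ Cmod (z e - c e) < rho e ^ (Q+3) - rho e ^ m)).
  { eapply ev_impl. apply ev_and; [exact HG| apply ev_and; [exact HQ|exact Hm]].
    intros e [H1 [H2 H3]]. repeat split; try tauto; lra. }
  assert (HC2 : ev (fun e => (0 < rho e <= 1/2) /\ (forall n, Cmod (a n e) <= / rho e ^ (n*Q+Rr))
      /\ Cmod (z e - c e) <= rho e ^ (Q+3))).
  { eapply ev_impl; [exact HC|]. intros e [H1 [H2 H3]]. repeat split; try tauto.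
    assert (0 < rho e ^ m) by (apply pow_lt; lra). lra. }
  split.
  - exists (Q+3)%nat. eapply ev_impl; [exact HC2|]. intros e [Hr [HA Hw]].
    unfold rad. apply (rad_bound (fun n => a n e) (rho e) Q Rr); auto.
    assert (0 < rho e ^ (Q+1)) by (apply pow_lt; lra).
    assert (E : rho e ^ (Q+3) = rho e ^ (Q+1) * (rho e * rho e)).
    { replace (Q+3)%nat with (Q+1+2)%nat by lia. rewrite pow_add. simpl. ring. }
    rewrite E in Hw |- *.
    assert (rho e * rho e <= 1/4) by nra.
    assert (rho e ^ (Q+1) * (rho e * rho e) <= rho e ^ (Q+1) * (1/4)) by (apply Rmult_le_compat_l; lra).
    lra.
  - exists z, c, a. split.
    { intros q. eapply ev_impl; [exact HG|]. intros e He.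
      replace (z e - z e)%C with (RtoC 0) by ring. rewrite Cmod_0. apply pow_le; lra. }
    split.
    { intros q. eapply ev_impl; [exact HG|]. intros e He.
      replace (c e - c e)%C with (RtoC 0) by ring. rewrite Cmod_0. apply pow_le; lra. }
    split; [exists Q, Rr; exact HQ|].
    split.
    { intros q r. eapply ev_impl; [exact HG|]. intros e He n.
      replace (a n e - a n e)%C with (RtoC 0) by ring. rewrite Cmod_0. apply pow_le; lra. }
    split.
    {
      intros N HN. exists (Rr+2)%nat. eapply ev_impl; [exact HC2|]. intros e [Hr [HA Hw]].
      cbv beta.
      pose proof (partial_bound (fun n => (a n e * Cpow (z e - c e) n)%C) (/ rho e ^ Rr) (rho e / 2)
        (Kpos _ _ (proj1 Hr)) ltac:(lra) (term_bound (fun n => a n e) _ _ _ _ Hr HA Hw) (N e)) as HP.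
      pose proof (inv_pow_4 _ Rr Hr).
      assert (0 <= / rho e ^ Rr * (rho e / 2) ^ S (N e)).
      { apply Rmult_le_pos; [apply Kpos; lra|apply pow_le; lra]. }
      pose proof (Kpos (rho e) Rr (proj1 Hr)). lra. }
    split.
    {
      destruct (choose_series (fun e n => (a n e * Cpow (z e - c e) n)%C)) as [l Hl].
      assert (HS : ev (fun e => is_series (fun n => (a n e * Cpow (z e - c e) n)%C) (l e))).
      { eapply ev_impl; [exact HC2|]. intros e [Hr [HA Hw]]. apply Hl.
        exact (series_ex _ (/ rho e ^ Rr) (rho e / 2) ltac:(lra)
          (term_bound (fun n => a n e) _ _ _ _ Hr HA Hw)). }
      exists l. split.
      { exists (Rr+2)%nat. eapply ev_impl; [apply ev_and; [exact HC2|exact HS]|].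
        intros e [[Hr [HA Hw]] HLs].
        pose proof (L_bound _ (/ rho e ^ Rr) (rho e / 2) (Kpos _ _ (proj1 Hr)) ltac:(lra)
          (term_bound (fun n => a n e) _ _ _ _ Hr HA Hw) _ HLs).
        pose proof (inv_pow_4 _ Rr Hr). lra. }
      split; [exact HS|].
      intros q'. exists (fun _ => (Rr + q' + 2)%nat). split.
      { exists (Rr + q' + 2)%nat. eapply ev_impl; [exact HG|]. intros e Hr.
        rewrite Rabs_pos_eq by apply pos_INR.
        pose proof (INR_2pow (Rr + q' + 2)). rewrite S_INR in H.
        rewrite <- pow_inv.
        assert (2 <= / rho e). { rewrite <- (Rinv_inv 2). apply Rinv_le_contravar; lra. }
        assert (2 ^ (Rr + q' + 2) <= (/ rho e) ^ (Rr + q' + 2)) by (apply pow_incr; lra).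
        lra. }
      intros n Hn [zz [Hzz Hle]]. exists (q'+2)%nat.
      eapply ev_impl. apply ev_and; [exact HC2| apply ev_and; [exact Hle| exact (Hzz O)]].
      intros e [[Hr [HA Hw]] [H1 H2]]. simpl in H2.
      assert (HNe : (Rr + q' + 2 <= n e + 1)%nat).
      { apply INR_le. pose proof (Rle_abs (zz e)). rewrite !plus_INR in *. simpl (INR 1) in *. simpl (INR 2) in *. lra. }
      assert (HLs : is_series (fun n => (a n e * Cpow (z e - c e) n)%C) (l e)).
      { apply Hl. exact (series_ex _ (/ rho e ^ Rr) (rho e / 2) ltac:(lra)
          (term_bound (fun n => a n e) _ _ _ _ Hr HA Hw)). }
      pose proof (tail_bound _ (/ rho e ^ Rr) (rho e / 2) (Kpos _ _ (proj1 Hr)) ltac:(lra)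
          (term_bound (fun n => a n e) _ _ _ _ Hr HA Hw) _ HLs (n e)) as HT.
      cbv beta.
      set (r := rho e) in *. set (N := n e) in *.
      assert (Hr0 : 0 < r ^ Rr) by (apply pow_lt; lra).
      assert (E1 : (r/2) ^ S N = r ^ S N * (1/2) ^ S N).
      { rewrite <- Rpow_mult_distr. f_equal. lra. }
      assert (E2 : (1/2) ^ S N <= 1/2).
      { simpl. pose proof (pow_decr' (1/2) 0 N ltac:(lra) ltac:(lia)). simpl in H. lra. }
      assert (E3 : r ^ S N = r ^ Rr * r ^ (S N - Rr)).
      { rewrite <- pow_add. f_equal. lia. }
      assert (E4 : r ^ (S N - Rr) <= r ^ (q' + 1)) by (apply pow_decr'; [lra|lia]).
      assert (E5 : 2 * / r ^ Rr * (r/2) ^ S N <= r ^ (q'+1)).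
      { rewrite E1, E3.
        assert (0 <= r ^ (S N - Rr)) by (apply pow_le; lra).
        replace (2 * / r ^ Rr * (r ^ Rr * r ^ (S N - Rr) * (1 / 2) ^ S N))
          with (r ^ (S N - Rr) * (2 * (1/2) ^ S N)) by (field; lra).
        assert (0 <= (1/2)^ S N) by (apply pow_le; lra).
        nra. }
      assert (0 < r ^ q') by (apply pow_lt; lra).
      replace (q' + 1)%nat with (S q') in E5 by lia.
      replace (q' + 2)%nat with (S (S q')) by lia.
      change (r ^ S q') with (r * r ^ q') in E5. change (r ^ S (S q')) with (r * (r * r ^ q')).
      assert (F1 : r * r ^ q' <= r ^ q' / 2) by nra.
      assert (F2 : r * (r * r ^ q') <= r ^ q' / 4) by nra.
      assert (F3 : 2 * / r ^ Rr * (r / 2) ^ S N = 2 * / r ^ Rr * (r / 2) ^ S N) by reflexivity.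
      lra. }
    {
      intros zh Hzh.
      destruct (choose_series (fun e n => (RtoC (INR (S n)) * a (S n) e * Cpow (zh e - c e) n)%C)) as [d Hd].
      assert (HC3 : ev (fun e => (0 < rho e <= 1/2) /\ (forall n, Cmod (a n e) <= / rho e ^ (n*Q+Rr))
        /\ Cmod (zh e - c e) <= rho e ^ (Q+3))).
      { eapply ev_impl; [apply ev_and; [exact HC|exact (Hzh m)]|].
        intros e [[H1 [H2 H3]] H4]. repeat split; try tauto.
        replace (zh e - c e)%C with ((zh e - z e) + (z e - c e))%C by ring.
        eapply Rle_trans; [apply Cmod_triangle|]. lra. }
      exists d. split.
      { exists (Q + Rr + 2)%nat. eapply ev_impl; [exact HC3|]. intros e [Hr [HA Hw]].
        assert (HLs : is_series (fun n => (RtoC (INR (S n)) * a (S n) e * Cpow (zh e - c e) n)%C) (d e)).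
        { apply Hd. exact (series_ex _ (/ rho e ^ (Q+Rr)) (1/2) ltac:(lra)
          (dterm_bound (fun n => a n e) _ _ _ _ Hr HA Hw)). }
        pose proof (L_bound _ (/ rho e ^ (Q+Rr)) (1/2) (Kpos _ _ (proj1 Hr)) ltac:(lra)
          (dterm_bound (fun n => a n e) _ _ _ _ Hr HA Hw) _ HLs).
        pose proof (inv_pow_4 _ (Q+Rr) Hr). lra. }
      { eapply ev_impl; [exact HC3|]. intros e [Hr [HA Hw]].
        apply Hd. exact (series_ex _ (/ rho e ^ (Q+Rr)) (1/2) ltac:(lra)
          (dterm_bound (fun n => a n e) _ _ _ _ Hr HA Hw)). } }
Qed.
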